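(* $h(3)\leq 5$; that is, every $\mathbb{Z}_3$-colorable graph is $\Gamma'$-colorable for every Abelian group $\Gamma'$ of order at least $5$.
   Context: Graphs are finite, may have multiple edges but no loops. For an Abelian group $\Gamma$, $G$ is $\Gamma$-colorable if for some (equivalently, any) orientation $D$ of $G$ and every $\varphi:E(G)\to\Gamma$ there is $c:V(G)\to\Gamma$ with $c(w)-c(u)\neq\varphi(uw)$ for every directed edge $uw$ of $D$. $h(k)$ is the least number such that whenever a graph is $\Gamma$-colorable for some Abelian group $\Gamma$ of order $k$, it is $\Gamma'$-colorable for every Abelian group $\Gamma'$ of order $|\Gamma'|\geq h(k)$. *)

(* Defs.v *)
From mathcomp Require Import all_boot all_algebra.
Set Implicit Arguments. Unset Strict Implicit. Unset Printing Implicit Defensive.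
Import GRing.Theory.
Local Open Scope ring_scope.

Record graph := Graph {
  gV : finType;
  gE : finType;
  src : gE -> gV;
  tgt : gE -> gV;
  noloop : forall e, src e != tgt e
}.

Definition colorable (Gamma : zmodType) (G : graph) : Prop :=
  forall phi : gE G -> Gamma, exists c : gV G -> Gamma,
    forall e : gE G, c (tgt e) - c (src e) != phi e.

(* Main.v *)
Require Import Defs.
From mathcomp Require Import all_boot all_algebra all_fingroup all_solvable.
Set Implicit Arguments. Unset Strict Implicit. Unset Printing Implicit Defensive.
Import GRing.Theory.

Section Count.
Variable G : graph.
Local Notation V := (gV G).
Local Notation E := (gE G).
Local Notation T := 'Z_3.

Definition ES (S : {set V}) : {set E} := [set e | (src e \in S) && (tgt e \in S)].

Definition valid (S : {set V}) (phi : {ffun E -> T}) (c : {ffun V -> T}) : bool :=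
  [forall e in ES S, (c (tgt e) - c (src e) != phi e)%R].

Lemma cardT3 : #|T| = 3.
Proof. by rewrite card_ord. Qed.

Lemma cnt_valid S c :
  #|[set phi | valid S phi c]| = 2 ^ #|ES S| * 3 ^ #|~: ES S|.
Proof.
pose F (e : E) : pred T := fun x => (e \notin ES S) || (x != (c (tgt e) - c (src e))%R).
have -> : #|[set phi | valid S phi c]| = #|@family_mem E (fun _ => T) (fun e => mem (F e))|.
  apply: eq_card => phi; rewrite inE /valid; apply/forallP/familyP => H e; move: (H e);
  by rewrite /F; case: (e \in ES S); rewrite unfold_in //= eq_sym.
rewrite card_family foldrE big_map big_enum /=.
rewrite (bigID (fun e => e \in ES S)) /=.
have -> : \prod_(i | i \in ES S) #|F i| = \prod_(i in ES S) 2.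
  apply: eq_bigr => e He.
  have -> : #|F e| = #|predC1 (c (tgt e) - c (src e))%R|.
    by apply: eq_card => x; rewrite /F He !unfold_in.
  by rewrite cardC1 cardT3.
have -> : \prod_(i | i \notin ES S) #|F i| = \prod_(i in ~: ES S) 3.
  apply: eq_big => [e|e He]; first by rewrite in_setC.
  apply: (etrans _ cardT3); apply: eq_card => x; by rewrite /F (negbTE He) unfold_in.
by rewrite !prod_nat_const.
Qed.

Definition C0 (S : {set V}) : {set {ffun V -> T}} :=
  [set c : {ffun V -> T} | [forall v, (v \notin S) ==> (c v == 0%R)]].

Lemma card_C0 S : #|C0 S| = 3 ^ #|S|.
Proof.
pose F (v : V) : pred T := fun x => (v \in S) || (x == 0%R).
have -> : #|C0 S| = #|@family_mem V (fun _ => T) (fun v => mem (F v))|.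
  apply: eq_card => c; rewrite inE; apply/forallP/familyP => H v; move: (H v);
  by rewrite /F; case: (v \in S); rewrite unfold_in.
rewrite card_family foldrE big_map big_enum /=.
rewrite (bigID (fun v => v \in S)) /=.
have -> : \prod_(i | i \in S) #|F i| = \prod_(i in S) 3.
  apply: eq_bigr => v Hv; apply: (etrans _ cardT3); apply: eq_card => x.
  by rewrite /F Hv unfold_in.
have -> : \prod_(i | i \notin S) #|F i| = 1.
  apply: big1 => v Hv.
  have -> : #|F v| = #|pred1 (0%R : T)| by apply: eq_card => x; rewrite /F (negbTE Hv) unfold_in.
  by rewrite card1.
by rewrite prod_nat_const muln1.
Qed.

Lemma sum_valid S c : \sum_(phi : {ffun E -> T}) (valid S phi c : nat) = #|[set phi | valid S phi c]|.
Proof.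
rewrite -sum1_card (big_mkcond (fun phi => phi \in [set phi | valid S phi c])) /=.
by apply: eq_bigr => phi _; rewrite inE; case: (valid S phi c).
Qed.

Lemma count_bound S : colorable 'Z_3 G -> 3 ^ #|ES S| <= 3 ^ #|S| * 2 ^ #|ES S|.
Proof.
move=> HG.
have H1 : 3 ^ #|E| <= \sum_(phi : {ffun E -> T}) \sum_(c in C0 S) (valid S phi c : nat).
  have -> : 3 ^ #|E| = \sum_(phi : {ffun E -> T}) 1.
    by rewrite sum1_card card_ffun cardT3.
  apply: leq_sum => phi _.
  have [c Hc] := HG (fun e => phi e).
  pose c0 := [ffun v => if v \in S then c v else 0%R] : {ffun V -> T}.
  have Hc0 : c0 \in C0 S.
    by rewrite inE; apply/forallP => v; rewrite ffunE; case: (v \in S).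
  rewrite (bigD1 c0) //=.
  have -> : valid S phi c0.
    apply/forallP => e; apply/implyP; rewrite inE => /andP [Hs Ht].
    by rewrite !ffunE Hs Ht.
  by rewrite add1n.
rewrite exchange_big /= in H1.
have H2 : \sum_(c in C0 S) \sum_(phi : {ffun E -> T}) (valid S phi c : nat)
          = 3 ^ #|S| * (2 ^ #|ES S| * 3 ^ #|~: ES S|).
  rewrite -card_C0 -sum_nat_const; apply: eq_bigr => c _.
  by rewrite sum_valid cnt_valid.
rewrite H2 in H1.
have HE : #|E| = #|ES S| + #|~: ES S| by rewrite cardsC.
rewrite HE expnD mulnA in H1.
by rewrite leq_pmul2r ?expn_gt0 // in H1.
Qed.

Definition degS (S : {set V}) (v : V) : nat :=
  \sum_(e in ES S) ((src e == v) + (tgt e == v)).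

Lemma sum_pick (S : {set V}) (u : V) : u \in S -> \sum_(v in S) (u == v) = 1.
Proof.
move=> Hu; rewrite (bigD1 u) //= eqxx big1 // => v /andP [_ Hv].
by rewrite eq_sym (negbTE Hv).
Qed.

Lemma handshake (S : {set V}) : \sum_(v in S) degS S v = 2 * #|ES S|.
Proof.
rewrite /degS exchange_big /= mulnC -sum_nat_const.
apply: eq_bigr => e; rewrite inE => /andP [Hs Ht].
by rewrite big_split /= !sum_pick.
Qed.

Lemma low_deg (S : {set V}) : colorable 'Z_3 G -> S != set0 ->
  exists2 v, v \in S & degS S v <= 5.
Proof.
move=> HG HS.
case: (boolP [exists v in S, degS S v <= 5]) => [/exists_inP [v Hv Hd]|Hno].
  by exists v.
exfalso.
have Hall : forall v, v \in S -> 6 <= degS S v.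
  move=> v Hv; rewrite ltnNge; apply/negP => Hd; move/negP: Hno; apply.
  by apply/exists_inP; exists v.
have H6 : 6 * #|S| <= 2 * #|ES S|.
  rewrite -handshake mulnC -sum_nat_const; exact: leq_sum.
have Ha : 0 < #|S| by rewrite card_gt0.
have Hb : 3 * #|S| <= #|ES S|.
  by rewrite -(leq_pmul2l (isT : 0 < 2)) mulnA.
have Hc := count_bound S HG.
move: Hc; rewrite -(subnKC Hb) (expnD 3 (3 * #|S|)) (expnD 2 (3 * #|S|)).
set a := #|S|; set k := _ - _.
have E1 : 3 ^ (3 * a) = 27 ^ a by rewrite expnM.
have E2 : 3 ^ a * 2 ^ (3 * a) = 24 ^ a by rewrite expnM -expnMn.
have H1 : 24 ^ a < 27 ^ a by rewrite ltn_exp2r.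
have H2 : 2 ^ k <= 3 ^ k by elim: (k) => // n IH; rewrite !expnS leq_mul.
rewrite mulnA E1 E2 => H.
have : 24 ^ a * 2 ^ k < 27 ^ a * 3 ^ k.
  apply: (@leq_ltn_trans (24 ^ a * 3 ^ k)).
    by rewrite leq_mul2l H2 orbT.
  by rewrite ltn_pmul2r ?expn_gt0.
by rewrite ltnNge H.
Qed.

Lemma inc_le_deg (S : {set V}) v :
  #|[set e in ES S | (src e == v) || (tgt e == v)]| <= degS S v.
Proof.
rewrite -sum1_card /degS.
rewrite [X in _ <= X](bigID (fun e => (src e == v) || (tgt e == v))) /=.
apply: leq_trans (leq_addr _ _).
rewrite (eq_bigl (fun e => (e \in ES S) && ((src e == v) || (tgt e == v)))); last first.
  by move=> e; rewrite inE.
apply: leq_sum => e /andP [_ /orP [] ->] //.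
by rewrite addn1.
Qed.

Lemma greedy (Gam : finZmodType) : 6 <= #|Gam| -> colorable 'Z_3 G ->
  forall (S : {set V}) (phi : E -> Gam), exists c : V -> Gam,
    forall e, e \in ES S -> (c (tgt e) - c (src e) != phi e)%R.
Proof.
move=> HGam HG S phi.
move: {2}#|S| (leqnn #|S|) => n; elim: n S => [|n IH] S HS.
  exists (fun _ => 0%R) => e; rewrite inE => /andP [Hs _].
  by move: HS; rewrite leqn0 cards_eq0 => /eqP HS; rewrite HS inE in Hs.
case: (eqVneq S set0) => [->|HS0].
  exists (fun _ => 0%R) => e; by rewrite inE in_set0.
have [v Hv Hd] := low_deg HG HS0.
have HS' : #|S :\ v| <= n.
  by move: HS; rewrite (cardsD1 v) Hv add1n ltnS.
have [c' Hc'] := IH _ HS'.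
pose Inc := [set e in ES S | (src e == v) || (tgt e == v)].
pose fb (e : E) := if src e == v then (c' (tgt e) - phi e)%R else (c' (src e) + phi e)%R.
pose Fb := [set fb e | e in Inc].
have HFb : #|Fb| < #|Gam|.
  apply: (leq_ltn_trans (leq_imset_card _ _)).
  by apply: leq_ltn_trans (inc_le_deg S v) _; apply: leq_trans HGam.
have [x Hx] : exists x, x \in ~: Fb.
  by apply/card_gt0P; rewrite cardsCs setCK subn_gt0.
rewrite inE in Hx.
exists (fun u => if u == v then x else c' u) => e He.
have Hne := noloop e.
case: (eqVneq (src e) v) => [Hs|Hs].
  have Ht : tgt e != v by rewrite -Hs eq_sym.
  rewrite (negbTE Ht).
  have HeI : e \in Inc by rewrite inE He Hs eqxx.
  have : fb e \in Fb by apply: imset_f.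
  rewrite /fb Hs eqxx => Hin.
  apply/negP => /eqP Heq; move/negP: Hx; apply.
  by rewrite -Heq subKr in Hin.
case: (eqVneq (tgt e) v) => [Ht|Ht].
  idtac.
  have HeI : e \in Inc by rewrite inE He Ht eqxx orbT.
  have : fb e \in Fb by apply: imset_f.
  rewrite /fb (negbTE Hs) => Hin.
  apply/negP => /eqP Heq; move/negP: Hx; apply.
  by rewrite -Heq addrC subrK in Hin.
apply: Hc'.
move: He; rewrite !inE => /andP [Hs' Ht'].
by rewrite Hs Ht Hs' Ht'.
Qed.
End Count.
Lemma compatZ3 (x y x' y' : 'Z_3) : (y + x' = y' + x)%N -> (y - x = y' - x')%R.
Proof.
move=> Hn; have := congr1 (fun n => ((n%:R)%R : 'Z_3)) Hn; rewrite /= !natrD !natr_Zp => E.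
by apply/eqP; rewrite subr_eq addrAC -E addrK.
Qed.

Section Embed.
Variable Gam : finZmodType.
Hypothesis H5 : #|Gam| = 5.
Variable g : Gam.
Hypothesis Hg : g != 0%R.

Lemma ord5 k : k < 5 -> (g *+ k)%R = 0%R -> k = 0.
Proof.
move=> Hk Hz.
have Hd : (#[g]%g %| 5)%N.
  rewrite -H5 -cardsT; apply: (@order_dvdG _ [set: Gam]%G); by rewrite inE.
have H1 : #[g]%g != 1%N by rewrite order_eq1.
have Ho : #[g]%g = 5 by apply/(prime_nt_dvdP _ H1).
have : (#[g]%g %| k)%N by rewrite order_dvdn; apply/eqP; exact: Hz.
rewrite Ho; case: k Hk {Hz} => // k Hk /(dvdn_leq (ltn0Sn k)).
by rewrite leqNgt Hk.
Qed.

Lemma inj5 a b : a < 5 -> b < 5 -> (g *+ a)%R = (g *+ b)%R -> a = b.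
Proof.
wlog Hab : a b / b <= a.
  move=> W Ha Hb H; case: (leqP b a) => Hba; first exact: W.
  by apply/esym; apply: W => //; apply: ltnW.
move=> Ha Hb H.
have Hz : (g *+ (a - b))%R = 0%R.
  move: H; rewrite -{1}(subnK Hab) mulrnDr => /(congr1 (fun z => z - g *+ b)%R).
  by rewrite /= addrK subrr.
have := ord5 (leq_ltn_trans (leq_subr b a) Ha) Hz.
by move/eqP; rewrite subn_eq0 => Hba; apply/eqP; rewrite eqn_leq Hab Hba.
Qed.
End Embed.

Lemma embed5 (G : graph) (Gam : finZmodType) : #|Gam| = 5 -> colorable 'Z_3 G -> colorable Gam G.
Proof.
move=> H5 HG phi.
have [g Hg] : exists g : Gam, g \in predC1 0%R.
  by apply/card_gt0P; rewrite cardC1 H5.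
rewrite inE in Hg.
pose io (x : 'Z_3) : Gam := (g *+ (x : nat))%R.
have compat : forall x y x' y' : 'Z_3, (io y - io x = io y' - io x')%R -> (y - x = y' - x')%R.
  move=> x y x' y' H; apply: compatZ3.
  have Hx : forall z : 'Z_3, (z : nat) <= 2 by move=> z; have := ltn_ord z.
  apply: (inj5 H5 Hg).
  - by apply: (leq_ltn_trans (leq_add (Hx y) (Hx x'))).
  - by apply: (leq_ltn_trans (leq_add (Hx y') (Hx x))).
  rewrite !mulrnDr -/(io y) -/(io x') -/(io y') -/(io x).
  move/(congr1 (fun z => z + io x + io x')%R): H.
  rewrite /= subrK [X in _ = X]addrAC subrK => ->.
  by rewrite addrC.
pose phi3 (e : gE G) : 'Z_3 :=
  if [pick p : 'Z_3 * 'Z_3 | (io p.2 - io p.1 == phi e)%R] is Some p then (p.2 - p.1)%R else 0%R.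
have [c3 Hc3] := HG phi3.
exists (fun v => io (c3 v)) => e.
apply/negP => /eqP H.
have := Hc3 e; rewrite /phi3.
case: pickP => [p /eqP Hp|Hn].
  rewrite -H in Hp; rewrite (compat _ _ _ _ Hp).
  by rewrite eqxx.
by have := Hn (c3 (src e), c3 (tgt e)); rewrite /= H eqxx.
Qed.

Theorem mainTheorem13 (G : graph) :
  colorable 'Z_3 G ->
  forall Gamma' : finZmodType, 5 <= #|Gamma'| -> colorable Gamma' G.
Proof.
move=> HG Gam HGam.
rewrite leq_eqVlt in HGam; case/orP: HGam => [/eqP H5|H6].
  exact: embed5 (esym H5) HG.
move=> phi.
have [c Hc] := greedy H6 HG [set: gV G] phi.
exists c => e; apply: Hc.
by rewrite inE !in_setT.
Qed.
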